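(* Let $\Gamma$ be a finite bipartite graph with $|V(\Gamma)|\geq 4$. The following are equivalent: (1) $P_5\not\leq\Gamma$ and $\Gamma$ is prime; (2) $\Gamma$ is critical; (3) $\Gamma$ is a half graph.
   Context: $P_5$ is the path on 5 vertices; $G\leq H$ means $G$ is isomorphic to an induced subgraph of $H$. A module of a graph is a set $M$ of vertices such that every vertex outside $M$ is adjacent to all or none of $M$; $\emptyset$, $V(\Gamma)$ and singletons are trivial; $\Gamma$ is prime if $|V(\Gamma)|\geq3$ and all modules are trivial; a prime graph is critical if $\Gamma-v$ is not prime for every vertex $v$. A bipartite graph with bipartition $\{X,Y\}$ is a half graph if there exist a linear order $L$ on $X$ and a bijection $\varphi:X\to Y$ with $E(\Gamma)=\{\{x,\varphi(x')\}: x\leq x'\bmod L\}$. *)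

(* Defs.v *)
(* A finite simple graph is a symmetric irreflexive relation
   e : rel T on a finType T; its vertex set is [set: T]. *)
From mathcomp Require Import all_boot.
Set Implicit Arguments. Unset Strict Implicit. Unset Printing Implicit Defensive.

Section Graphs.
Variable T : finType.
Variable e : rel T.

Definition simple_graph : Prop := symmetric e /\ irreflexive e.

Definition bipartite : Prop :=
  exists X : {set T}, forall u v, e u v -> (u \in X) != (v \in X).

Definition module_on (S M : {set T}) : Prop :=
  M \subset S /\
  forall v, v \in S :\: M ->
    (forall m, m \in M -> e v m) \/ (forall m, m \in M -> ~~ e v m).

Definition trivial_module_on (S M : {set T}) : Prop :=
  M = set0 \/ M = S \/ #|M| = 1.

Definition prime_on (S : {set T}) : Prop :=
  3 <= #|S| /\ forall M : {set T}, module_on S M -> trivial_module_on S M.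

Definition prime_graph : Prop := prime_on [set: T].

Definition critical : Prop :=
  prime_graph /\ forall v : T, ~ prime_on ([set: T] :\ v).

Definition path_adj (n : nat) : rel 'I_n := fun i j => (i.+1 == j) || (j.+1 == i).

Definition induced_sub (U : finType) (g : rel U) : Prop :=
  exists f : U -> T, injective f /\ forall i j, e (f i) (f j) = g i j.

Definition contains_P5 : Prop := induced_sub (@path_adj 5).

Definition linear_order_on (X : {set T}) (L : rel T) : Prop :=
  {in X, reflexive L} /\
  {in X &, antisymmetric L} /\
  {in X & X & X, forall x y z, L x y -> L y z -> L x z} /\
  {in X &, total L}.

Definition half_graph : Prop :=
  exists (X : {set T}) (L : rel T) (phi : T -> T),
    linear_order_on X L /\
    {in X &, injective phi} /\
    (forall x, x \in X -> phi x \in ~: X) /\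
    (forall y, y \in ~: X -> exists2 x, x \in X & phi x = y) /\
    (forall u v, e u v <->
       exists x x', [/\ x \in X, x' \in X, L x x' &
         ((u = x /\ v = phi x') \/ (u = phi x' /\ v = x))]).

End Graphs.

(* Main.v *)
Require Import Defs.
From mathcomp Require Import all_boot.
From Stdlib Require Import Classical.
From mathcomp Require Import zify.
Set Implicit Arguments. Unset Strict Implicit. Unset Printing Implicit Defensive.

Section G.
Variable T : finType.
Variable e : rel T.
Hypothesis esym : symmetric e.
Hypothesis eirr : irreflexive e.
Variable X : {set T}.
Hypothesis hX : forall u v, e u v -> (u \in X) != (v \in X).
Implicit Types S M A C : {set T}.

Lemma side_opp u v : e u v -> (v \in X) = ~~ (u \in X).
Proof. by move/hX; case: (u \in X); case: (v \in X). Qed.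

Lemma same_noedge u v : (u \in X) = (v \in X) -> ~~ e u v.
Proof. by move=> H; apply/negP => /hX; rewrite H eqxx. Qed.

Lemma common_nbr u v w : e u w -> e v w -> (u \in X) = (v \in X).
Proof. by move=> /side_opp H1 /side_opp H2; move: H1 H2; case: (u \in X); case: (v \in X); case: (w \in X). Qed.

Definition closed_in (S M : {set T}) :=
  M \subset S /\ forall p q, p \in M -> q \in S -> q \notin M -> ~~ e p q.

Lemma closed_compl S M : closed_in S M -> closed_in S (S :\: M).
Proof.
case=> sMS H; split; first exact: subsetDl.
move=> p q; rewrite !inE => /andP[pM pS] qS; rewrite qS andbT negbK => qM.
by rewrite esym; apply: H.
Qed.

Lemma closed_module S M : closed_in S M -> module_on e S M.
Proof.
case=> sMS H; split=> // v; rewrite inE => /andP[vM vS]; right=> m mM.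
by rewrite esym; apply: H.
Qed.

Lemma prime_closed S M : prime_on e S -> closed_in S M -> M != set0 -> M = S.
Proof.
move=> [S3 HP] cM M0.
case: (HP _ (closed_module cM)) => [/eqP|[//|M1]]; first by rewrite (negbTE M0).
exfalso.
have cM' := closed_compl cM.
have sMS : M \subset S by case: cM.
have C := cardsD S M; rewrite (setIidPr sMS) M1 in C.
case: (HP _ (closed_module cM')) => [E|[E|E]]; rewrite E ?cards0 in C.
- lia.
- lia.
- lia.
Qed.

Lemma prime_nbr S p : prime_on e S -> p \in S -> exists2 q, q \in S & e p q.
Proof.
move=> PS pS; apply: NNPP => H.
have cM : closed_in S [set p].
  split; first by rewrite sub1set.
  move=> a q; rewrite inE => /eqP -> qS _; apply/negP => epq; apply: H; by exists q.
have E : [set p] = S by apply: (prime_closed PS cM); apply/set0Pn; exists p; rewrite inE.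
by case: PS => S3 _; move: S3; rewrite -E cards1.
Qed.

Lemma not_prime_module S M : 3 <= #|S| -> module_on e S M -> M != set0 -> M != S ->
  #|M| != 1 -> ~ prime_on e S.
Proof.
move=> _ mM M0 MS M1 [_ HP]; case: (HP _ mM) => [E|[E|E]].
- by rewrite E eqxx in M0.
- by rewrite E eqxx in MS.
- by rewrite E in M1.
Qed.

Lemma not_prime_closed S M : closed_in S M -> M != set0 -> M != S -> ~ prime_on e S.
Proof. by move=> cM M0 MS PS; move: MS; rewrite (prime_closed PS cM M0) eqxx. Qed.

Lemma prime_twins S a b : prime_on e S -> a \in S -> b \in S -> a != b ->
  (forall c, c \in S -> c != a -> c != b -> e a c = e b c) -> False.
Proof.
move=> PS aS bS ab H.
have mM : module_on e S [set a; b].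
  split; first by apply/subsetP => x; rewrite !inE => /orP[]/eqP->.
  move=> v; rewrite !inE negb_or => /andP[/andP[va vb] vS].
  case E: (e v a).
  - left=> m; rewrite !inE => /orP[]/eqP->//. by rewrite esym -H // esym.
  - right=> m; rewrite !inE => /orP[]/eqP->; first by rewrite E.
    by rewrite esym -H // esym E.
have S3 : 3 <= #|S| by case: PS.
apply: (not_prime_module S3 mM) => //.
- by apply/set0Pn; exists a; rewrite !inE eqxx.
- apply/eqP => E; move: S3; rewrite -E cards2 ab //.
- by rewrite cards2 ab.
Qed.


Lemma dec S v : prime_on e S -> v \in S -> 4 <= #|S| -> ~ prime_on e (S :\ v) ->
  (exists M, [/\ closed_in (S :\ v) M, M != set0 & M != S :\ v]) \/
  (exists a b, [/\ a \in S :\ v, b \in S :\ v, e a v, ~~ e b v &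
     forall c, c \in S :\ v -> e a c = e b c]).
Proof.
move=> PS vS S4 NP.
have S3' : 3 <= #|S :\ v| by rewrite (cardsD1 v S) vS in S4; lia.
have [M [mM nT]] : exists M, module_on e (S :\ v) M /\ ~ trivial_module_on (S :\ v) M.
  apply: NNPP => H; apply: NP; split=> // M mM; apply: NNPP => nT; apply: H; by exists M.
have M0 : M != set0 by apply/eqP => E; apply: nT; left.
have MS : M != S :\ v by apply/eqP => E; apply: nT; right; left.
have M1 : #|M| != 1 by apply/eqP => E; apply: nT; right; right.
case: (mM) => sM HM.
have sMS : M \subset S by apply: (subset_trans sM); apply: subsetDl.
have vM : v \notin M by apply/negP => /(subsetP sM); rewrite !inE eqxx.
have NmS : ~ module_on e S M.
  move=> mS; case: PS => _ /(_ _ mS) [E|[E|E]].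
  - by rewrite E eqxx in M0.
  - by rewrite E vS in vM.
  - by rewrite E in M1.
have nall : ~ (forall m, m \in M -> e v m) /\ ~ (forall m, m \in M -> ~~ e v m).
  split=> Hv; apply: NmS; split=> // w; rewrite inE => /andP[wM wS];
  (have [->|wv] := eqVneq w v; [by (left + right)|]);
  by apply: HM; rewrite !inE wM wv wS.
have [a aM eva] : exists2 a, a \in M & e v a.
  apply: NNPP => H; apply: nall.2 => m mM0; apply/negP => evm; apply: H; by exists m.
have [b bM nevb] : exists2 b, b \in M & ~~ e v b.
  apply: NNPP => H; apply: nall.1 => m mM0; apply/negPn/negP => nevm; apply: H; by exists m.
have aS : a \in S :\ v by apply: (subsetP sM).
have bS : b \in S :\ v by apply: (subsetP sM).
case: (classic (exists2 c, c \in (S :\ v) :\: M & forall m, m \in M -> e c m)).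
- case=> c cD call; right; exists a, b; split=> //; rewrite ?(esym a) ?(esym b) //.
  move=> c' c'S; have [c'M|c'M] := boolP (c' \in M).
  + have ha : (a \in X) = (c' \in X) by apply: (common_nbr (v:=c') (w:=c)); rewrite esym; apply: call.
    have hb : (b \in X) = (c' \in X) by apply: (common_nbr (v:=c') (w:=c)); rewrite esym; apply: call.
    by rewrite (negbTE (same_noedge ha)) (negbTE (same_noedge hb)).
  + have : c' \in (S :\ v) :\: M by rewrite inE c'M c'S.
    case/HM => Hc; rewrite esym (esym b).
    * by rewrite !Hc.
    * by rewrite (negbTE (Hc _ aM)) (negbTE (Hc _ bM)).
- move=> NC; left; exists M; split=> //; split=> // p q pM qS qM.
  have : q \in (S :\ v) :\: M by rewrite inE qM qS.
  case/HM => Hq; last by rewrite esym; apply: Hq.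
  by exfalso; apply: NC; exists q => //; rewrite inE qM qS.
Qed.

Lemma count_forest (L R : {set T}) (f g : T -> T) :
  (forall c, c \in L -> [/\ f c \in R, g c \in R, e (f c) c, ~~ e (g c) c &
     forall d, d \in L -> d != c -> e (f c) d = e (g c) d]) ->
  R != set0 -> #|L| < #|R|.
Proof.
have [n] := ubnP #|R|; elim: n L R => // n IH L R ltRn H R0.
have [L0|] := eqVneq L set0; first by rewrite L0 cards0 card_gt0.
case/set0Pn => c cL.
have [fR gR efc egc _] := H c cL.
set P := [set r | e r c].
set R1 := R :&: P. set R2 := R :\: P.
have f1 : f c \in R1 by rewrite !inE fR efc.
have g2 : g c \in R2 by rewrite !inE gR egc.
have CR := cardsID P R. rewrite -/R1 -/R2 in CR.
have R1p : 0 < #|R1| by rewrite card_gt0; apply/set0Pn; exists (f c).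
have R2p : 0 < #|R2| by rewrite card_gt0; apply/set0Pn; exists (g c).
set L' := L :\ c.
set Q := [set d | f d \in R1].
set L1 := L' :&: Q. set L2 := L' :\: Q.
have CL := cardsID Q L'. rewrite -/L1 -/L2 in CL.
have CL' := cardsD1 c L. rewrite cL -/L' in CL'.
have HL1 : #|L1| < #|R1|.
  apply: IH; first by lia.
  - move=> d; rewrite /L1 /L' /Q !inE => /andP[/andP[dc dL] fd].
    have [fdR gdR efd egd Hd] := H d dL.
    split=> //.
    + move: fd => /andP[_ fdc]; rewrite gdR /= -Hd //; by rewrite eq_sym.
    + move=> d'; rewrite !inE => /andP[/andP[_ d'L] _]; by apply: Hd.
  - by apply/set0Pn; exists (f c).
have HL2 : #|L2| < #|R2|.
  apply: IH; first by lia.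
  - move=> d; rewrite /L2 /L' /Q !inE => /andP[fd /andP[dc dL]].
    have [fdR gdR efd egd Hd] := H d dL.
    move: fd; rewrite fdR /= => fdc.
    split=> //.
    + by rewrite fdc.
    + rewrite gdR andbT -Hd //; by rewrite eq_sym.
    + move=> d'; rewrite !inE => /andP[_ /andP[_ d'L]]; by apply: Hd.
  - by apply/set0Pn; exists (g c).
lia.
Qed.


Definition critical_on S := prime_on e S /\ forall v, v \in S -> ~ prime_on e (S :\ v).

Definition closedb S M :=
  (M \subset S) && [forall p in M, forall q in S, (q \notin M) ==> ~~ e p q].

Lemma closedbP S M : reflect (closed_in S M) (closedb S M).
Proof.
apply: (iffP andP) => [[sM /forallP H]|[sM H]]; split=> //.
- move=> p q pM qS qM; move: (H p); rewrite pM /= => /forallP/(_ q).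
  by rewrite qS qM.
- apply/forallP => p; apply/implyP => pM; apply/forallP => q; apply/implyP => qS.
  by apply/implyP => qM; apply: H.
Qed.

Definition twb S v a b := [&& a \in S :\ v, b \in S :\ v, e a v, ~~ e b v &
  [forall c in S :\ v, e a c == e b c]].

Lemma twbP S v a b : reflect ([/\ a \in S :\ v, b \in S :\ v, e a v, ~~ e b v &
  forall c, c \in S :\ v -> e a c = e b c]) (twb S v a b).
Proof.
apply: (iffP and5P) => [[? ? ? ? /forallP H]|[? ? ? ? H]]; split=> //.
- by move=> c cS; move: (H c); rewrite cS => /eqP.
- by apply/forallP => c; apply/implyP => cS; rewrite H.
Qed.

Lemma choose2 (A : {set T}) (P : T -> T -> T -> bool) :
  (forall v, v \in A -> exists a b, P a b v) ->
  exists f g : T -> T, forall v, v \in A -> P (f v) (g v) v.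
Proof.
move=> H.
pose h v := [pick ab : T * T | P ab.1 ab.2 v].
exists (fun v => if h v is Some ab then ab.1 else v).
exists (fun v => if h v is Some ab then ab.2 else v).
move=> v vA; rewrite /h; case: pickP => [ab //|H0].
by exfalso; case: (H v vA) => a [b Pab]; move: (H0 (a, b)); rewrite /= Pab.
Qed.

Lemma tw_side S v a b : prime_on e S -> a \in S :\ v -> b \in S :\ v -> e a v -> ~~ e b v ->
  (forall c, c \in S :\ v -> e a c = e b c) ->
  (a \in X) = ~~ (v \in X) /\ (b \in X) = ~~ (v \in X).
Proof.
move=> PS aS bS eav nebv H.
have ha : (a \in X) = ~~ (v \in X) by rewrite (side_opp eav) negbK.
split=> //.
have bS' : b \in S by move: bS; rewrite inE => /andP[].
case: (prime_nbr PS bS') => q qS ebq.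
have qv : q != v by apply: contraNneq nebv => <-.
have eaq : e a q by rewrite H // !inE qv.
by rewrite -(common_nbr eaq ebq).
Qed.

Lemma count_sides C Lf (f g : T -> T) :
  (forall w, w \in C -> [/\ f w \in C, g w \in C :|: Lf, (f w \in X) = ~~ (w \in X) /\
     (g w \in X) = ~~ (w \in X), e (f w) w /\ ~~ e (g w) w &
     forall d, d \in C -> d != w -> e (f w) d = e (g w) d]) ->
  C != set0 -> #|Lf| <= 1 -> False.
Proof.
move=> H C0 L1.
case/set0Pn: C0 => w wC.
have [fwC _ [sfw _] _ _] := H w wC.
have H1 : #|C :&: X| < #|(C :|: Lf) :&: ~: X|.
  apply: (@count_forest _ _ f g).
  - move=> c; rewrite inE => /andP[cC cX].
    have [fC gC [sf sg] [ef eg] Hd] := H c cC.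
    split=> //.
    + by rewrite !inE fC sf cX.
    + by rewrite inE gC inE sg cX.
    + move=> d; rewrite inE => /andP[dC _]; exact: Hd.
  - apply/set0Pn; case: (boolP (w \in X)) => wX.
    + by exists (f w); rewrite !inE fwC sfw wX.
    + by exists w; rewrite !inE wC wX.
have H2 : #|C :&: ~: X| < #|(C :|: Lf) :&: X|.
  apply: (@count_forest _ _ f g).
  - move=> c; rewrite inE => /andP[cC]; rewrite inE => cX.
    have [fC gC [sf sg] [ef eg] Hd] := H c cC.
    split=> //.
    + by rewrite !inE fC sf cX.
    + by rewrite inE gC sg cX.
    + move=> d; rewrite inE => /andP[dC _]; exact: Hd.
  - apply/set0Pn; case: (boolP (w \in X)) => wX.
    + by exists w; rewrite !inE wC wX.
    + by exists (f w); rewrite !inE fwC sfw wX.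
have E1 := cardsU (C :&: ~: X) (Lf :&: ~: X).
have E2 := cardsU (C :&: X) (Lf :&: X).
rewrite -setIUl in E1; rewrite -setIUl in E2.
have E3 := cardsID X C. have E4 := cardsID X Lf.
rewrite setDE in E3; rewrite setDE in E4.
lia.
Qed.

Lemma split_closed S' M u : closed_in S' M -> M != set0 -> M != S' -> u \in S' ->
  exists A, [/\ closed_in S' A, A != set0 & u \notin A].
Proof.
move=> cM M0 MS uS; have [uM|uM] := boolP (u \in M).
- exists (S' :\: M); split; first exact: closed_compl.
  + apply: contraNneq MS => /eqP; rewrite setD_eq0 => sSM.
    by rewrite eqEsubset sSM andbT; case: cM.
  + by rewrite inE uM.
- by exists M.
Qed.

Lemma leaf S : critical_on S -> 4 <= #|S| ->
  exists l u, [/\ l \in S, u \in S & forall c, c \in S -> e l c = (c == u)].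
Proof.
move=> [PS NP] S4.
pose cutb v C := [&& v \in S, closedb (S :\ v) C, C != set0 & C != S :\ v].
have ex_cut : exists n, [exists v, exists C : {set T}, cutb v C && (#|C| == n)].
  apply: NNPP => H.
  have Hb : forall v, v \in S -> exists a b, twb S v a b.
    move=> v vS; case: (dec PS vS S4 (NP v vS)) =>
      [[M [cM M0 MS]]|[a [b [aS bS eav nebv Hab]]]].
    - exfalso; apply: H; exists #|M|; apply/existsP; exists v; apply/existsP; exists M.
      by rewrite /cutb vS M0 MS (introT (closedbP _ _) cM) eqxx.
    - by exists a, b; apply/twbP.
  case: (choose2 Hb) => f [g Hfg].
  apply: (@count_sides S set0 f g); last by rewrite cards0.
  - move=> w wS; case/twbP: (Hfg w wS) => aS bS ea nb Hab.
    have [sa sb] := tw_side PS aS bS ea nb Hab.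
    split.
    + by move: aS; rewrite !inE => /andP[].
    + by move: bS; rewrite !inE => /andP[_ ->].
    + by split.
    + by split.
    + by move=> d dS dw; apply: Hab; rewrite !inE dw.
  - have : 0 < #|S| by lia.
    by case/card_gt0P => x xS; apply/set0Pn; exists x.
case: (ex_minnP ex_cut) => n /existsP[v /existsP[C /andP[/and4P[vS /closedbP cC C0 CS] /eqP Cn]]] Hmin.
have mincut : forall w C', w \in S -> closed_in (S :\ w) C' -> C' != set0 ->
    C' != S :\ w -> n <= #|C'|.
  move=> w C' wS cC' C0' CS'; apply: Hmin; apply/existsP; exists w; apply/existsP; exists C'.
  by rewrite /cutb wS C0' CS' (introT (closedbP _ _) cC') eqxx.
have [sC clC] := cC.
have CSv : forall p, p \in C -> p \in S /\ p != v.
  by move=> p /(subsetP sC); rewrite !inE => /andP[-> ->].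
have cl : forall p q, p \in C -> q \in S -> q != v -> q \notin C -> ~~ e p q.
  by move=> p q pC qS qv qC; apply: clC => //; rewrite !inE qv qS.
case: (eqVneq #|C| 1) => [/eqP/cards1P [p Cp] | C1].
  have pC : p \in C by rewrite Cp inE.
  have [pS pv] := CSv p pC.
  have nb : forall q, q \in S -> e p q -> q = v.
    move=> q qS epq; apply/eqP/negPn/negP => qv.
    have qp : q != p by apply: contraTneq epq => ->; rewrite eirr.
    by have := cl p q pC qS qv; rewrite Cp !inE qp epq => /(_ isT).
  exists p, v; split=> // c cS.
  case: (prime_nbr PS pS) => q qS epq; have qv := nb q qS epq.
  by apply/idP/eqP => [/(nb c cS) //| ->]; rewrite -qv.
exfalso.
have C2 : 2 <= #|C| by move: C0 C1; rewrite -card_gt0; lia.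
pose D := (S :\ v) :\: C.
have inD : forall q, q \in D = [&& q \notin C, q != v & q \in S] by move=> q; rewrite !inE.
have [d dD evd] : exists2 d, d \in D & e v d.
  apply: NNPP => H.
  have cD : closed_in S D.
    split; first by apply/subsetP => x; rewrite inD => /and3P[].
    move=> p q pD qS qD.
    have [-> | qv] := eqVneq q v.
    - by apply/negP => epv; apply: H; exists p => //; rewrite esym.
    - move: pD qD; rewrite !inD qv qS /= andbT negbK => /and3P[pC pv pS] qC.
      by rewrite esym; apply: cl.
  have D0 : D != set0.
    apply: contraNneq CS => /eqP; rewrite setD_eq0 => sub.
    by rewrite eqEsubset sub sC.
  have E := prime_closed PS cD D0.
  by move: vS; rewrite -E inD eqxx andbF.
move: dD; rewrite inD => /and3P[dC dv dS].
have [x0 x0C evx0] : exists2 x0, x0 \in C & e v x0.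
  apply: NNPP => H.
  have cCS : closed_in S C.
    split; first by apply/subsetP => x /CSv[].
    move=> p q pC qS qC.
    have [-> | qv] := eqVneq q v.
    - by apply/negP => epv; apply: H; exists p => //; rewrite esym.
    - by apply: cl.
  have E := prime_closed PS cCS C0.
  by move: vS; rewrite -E => /CSv[_]; rewrite eqxx.
have [x0S x0v] := CSv x0 x0C.
have [x1 [x1C x10 evx1]] : exists x1, [/\ x1 \in C, x1 != x0 & e v x1].
  apply: NNPP => H.
  have cC' : closed_in (S :\ x0) (C :\ x0).
    split.
      apply/subsetP => x; rewrite !inE => /andP[-> /CSv[-> _]] //.
    move=> p q; rewrite !inE => /andP[px0 pC] /andP[qx0 qS]; rewrite qx0 /= => qC.
    have [->|qv] := eqVneq q v.
    - by apply/negP => epv; apply: H; exists p; split=> //; rewrite esym.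
    - by apply: cl.
  have CD1 := cardsD1 x0 C; rewrite x0C in CD1.
  have := mincut x0 (C :\ x0) x0S cC'.
  have -> : C :\ x0 != set0 by rewrite -card_gt0; move: C2; rewrite CD1 /= add1n ltnS.
  have -> : C :\ x0 != S :\ x0.
    apply/eqP => E; have : v \in S :\ x0 by rewrite !inE vS eq_sym x0v.
    by rewrite -E inE => /andP[_ /CSv[_]]; rewrite eqxx.
  by move=> /(_ isT isT); rewrite -Cn CD1 /= add1n ltnn.
have two : forall w, w \in C -> exists2 c, c \in C & (c != w) && e v c.
  move=> w wC; have [->|wx0] := eqVneq w x0.
  - by exists x1 => //; rewrite x10.
  - by exists x0 => //; rewrite eq_sym wx0.
have nocut : forall w, w \in C -> forall C', closed_in (S :\ w) C' -> C' != set0 ->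
    C' != S :\ w -> False.
  move=> w wC C' cC' C0' CS'.
  have [wS wv] := CSv w wC.
  have vSw : v \in S :\ w by rewrite !inE eq_sym wv vS.
  case: (split_closed cC' C0' CS' vSw) => A [cA A0 vA].
  have [sA clA] := cA.
  have AS : forall p, p \in A -> p \in S /\ p != w.
    by move=> p /(subsetP sA); rewrite !inE => /andP[-> ->].
  have [AC0|AC0] := eqVneq (A :&: C) set0.
  - have cAS : closed_in S A.
      split; first by apply/subsetP => p /AS[].
      move=> p q pA qS qA.
      have [->|qw] := eqVneq q w.
      + have [pS pw] := AS p pA.
        have pC : p \notin C.
          by apply/negP => pC; move: AC0 => /setP/(_ p); rewrite !inE pA pC.
        have pv : p != v by apply: contraNneq vA => <-.
        by rewrite esym; apply: cl.
      + by apply: clA => //; rewrite !inE qw qS.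
    have E := prime_closed PS cAS A0.
    by move: wS; rewrite -E => /AS[_]; rewrite eqxx.
  - have cAC : closed_in (S :\ w) (A :&: C).
      split; first by apply: (subset_trans (subsetIl A C)).
      move=> p q /setIP[pA pC] qS qAC.
      have [qA|qA] := boolP (q \in A); last by apply: clA.
      have qC : q \notin C by move: qAC; rewrite inE qA.
      move: qS; rewrite !inE => /andP[_ qS].
      apply: cl => //; apply: contraNneq vA => <- //.
    have := mincut w (A :&: C) wS cAC AC0.
    have -> : A :&: C != S :\ w.
      by apply/eqP => E; move: vSw; rewrite -E inE (negbTE vA).
    have : #|A :&: C| <= #|C :\ w|.
      apply: subset_leq_card; apply/subsetP => p; rewrite !inE => /andP[pA ->].
      by have [_ ->] := AS p pA.
    have := cardsD1 w C; rewrite wC.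
    move=> E1 le1 /(_ isT) le2.
    by have := leq_trans le2 le1; rewrite -Cn E1 /= add1n ltnn.
have Hb : forall w, w \in C -> exists a b, twb S w a b.
  move=> w wC; have [wS _] := CSv w wC.
  case: (dec PS wS S4 (NP w wS)) => [[M [cM M0 MS]]|[a [b [aS bS eaw nebw Hab]]]].
  - by exfalso; apply: (nocut w wC M).
  - by exists a, b; apply/twbP.
case: (choose2 Hb) => f [g Hfg].
pose Lf := [set p in S | [forall c in S, e p c == (c == v)]].
have loc : forall w, w \in C -> f w \in C /\ g w \in C :|: Lf.
  move=> w wC; case/twbP: (Hfg w wC) => aS bS ea nb Hab.
  have [wS wv] := CSv w wC.
  have dw : d != w by apply: contraNneq dC => ->.
  have dSw : d \in S :\ w by rewrite !inE dw dS.
  move: aS bS; rewrite !inE => /andP[aw aS'] /andP[bw bS'].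
  have faC : f w \in C.
    apply: contraT => aC.
    case: (eqVneq (f w) v) => [av|av].
    - case: (two w wC) => c cC0 /andP[cw evc].
      have [cS _] := CSv c cC0.
      have ebc : e (g w) c by rewrite -Hab ?av // !inE cw cS.
      have ebd : e (g w) d by rewrite -Hab ?av // !inE dw dS.
      have [bC|bC] := boolP (g w \in C).
      + by have := cl (g w) d bC dS dv dC; rewrite ebd.
      + have bv : g w != v by apply: contraNneq nb => ->; rewrite -av.
        by have := cl c (g w) cC0 bS' bv bC; rewrite esym ebc.
    - by have := cl w (f w) wC aS' av aC; rewrite esym ea.
  split=> //.
  have [bC|bC] := boolP (g w \in C); first by apply/orP; left.
  apply/orP; right.
  have bv : g w != v.
    apply/eqP => bv.
    have : e (f w) d by rewrite Hab ?bv // !inE dw dS.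
    by rewrite (negbTE (cl _ _ faC dS dv dC)).
  have nbq : forall q, q \in S -> e (g w) q -> q = v.
    move=> q qS ebq; apply/eqP/negPn/negP => qv.
    have [qC|qC] := boolP (q \in C).
    - by have := cl q (g w) qC bS' bv bC; rewrite esym ebq.
    - have qw : q != w by apply: contraNneq qC => ->.
      have eaq : e (f w) q by rewrite Hab // !inE qw qS.
      by have := cl (f w) q faC qS qv qC; rewrite eaq.
  apply/andP; split=> //; apply/forallP => c; apply/implyP => cS.
  have [->|cv] := eqVneq c v.
  - case: (prime_nbr PS bS') => q qS ebq.
    by have qv := nbq q qS ebq; rewrite -qv ebq.
  - apply/eqP/negP => ebc; by move: cv; rewrite (nbq c cS ebc) eqxx.
have L1 : #|Lf| <= 1.
  apply/card_le1_eqP => p p'; rewrite !inE => /andP[pS /forallP Hp] /andP[p'S /forallP Hp'].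
  apply/eqP; apply: contraT => pp'; exfalso.
  apply: (prime_twins PS p'S pS pp') => c cS _ _.
  by move: (Hp c) (Hp' c); rewrite cS /= => /eqP -> /eqP ->.
apply: (@count_sides C Lf f g) => //.
move=> w wC; have [fC gC] := loc w wC; case/twbP: (Hfg w wC) => aS bS ea nb Hab.
have [sa sb] := tw_side PS aS bS ea nb Hab.
split=> //.
move=> d' d'C d'w; apply: Hab; have [d'S _] := CSv d' d'C; by rewrite !inE d'w d'S.
Qed.

Definition chain_on S := forall a b, a \in S -> b \in S -> (a \in X) = (b \in X) ->
  (forall c, c \in S -> e a c -> e b c) \/ (forall c, c \in S -> e b c -> e a c).

Lemma chain_small S : #|S| <= 3 -> chain_on S.
Proof.
move=> S3 a b aS bS sab.
have [<-|ab] := eqVneq a b; first by left.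
case: (classic (exists2 c, c \in S & e a c)) => [[c cS eac]|NC]; last first.
  by left => c cS eac; exfalso; apply: NC; exists c.
right => c' c'S ebc'.
apply: contraTT S3 => neac'; rewrite -ltnNge.
have c'c : c' != c by apply: contraNneq neac' => ->.
have ca : c != a by apply: contraTneq eac => ->; rewrite eirr.
have cb : c != b by apply: contraTneq eac => ->; apply: same_noedge.
have c'a : c' != a by apply: contraTneq ebc' => ->; rewrite esym; apply: same_noedge.
have c'b : c' != b by apply: contraTneq ebc' => ->; rewrite eirr.
have U : uniq [:: a; b; c; c'].
  rewrite /= !inE !negb_or ab (eq_sym a c) ca (eq_sym a c') c'a (eq_sym b c) cb.
  by rewrite (eq_sym b c') c'b (eq_sym c c') c'c.
have sub : {subset [:: a; b; c; c'] <= enum S}.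
  by move=> x; rewrite mem_enum !inE => /orP[/eqP->|/orP[/eqP->|/orP[/eqP->|/eqP->]]].
by rewrite cardE; apply: (uniq_leq_size U sub).
Qed.

Section Step.
Variables (S : {set T}) (l u u' : T).
Hypothesis PS : prime_on e S.
Hypotheses (lS : l \in S) (uS : u \in S) (u'S : u' \in S).
Hypothesis Hl : forall c, c \in S -> e l c = (c == u).
Hypothesis Hu : forall c, c \in S :\ l -> e u c = e u' c.
Hypotheses (u'l : u' != l) (u'u : u' != u).

Let S0 := S :\ l :\ u.

Lemma inS0 x : (x \in S0) = [&& x != u, x != l & x \in S].
Proof. by rewrite /S0 !inE. Qed.

Lemma elu : e l u.
Proof. by rewrite Hl // eqxx. Qed.

Lemma ul : u != l.
Proof. by apply: contraTneq elu => ->; rewrite eirr. Qed.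

Lemma nu'l : ~~ e u' l.
Proof. by rewrite esym Hl // (negbTE u'u). Qed.

Lemma nu'u : ~~ e u' u.
Proof. by rewrite -Hu ?eirr // !inE ul uS. Qed.

Lemma su : (u \in X) = (u' \in X).
Proof.
case: (prime_nbr PS u'S) => q qS eq.
have ql : q != l by apply: contraTneq eq => ->; rewrite (negbTE nu'l).
have euq : e u q by rewrite Hu // !inE ql qS.
exact: common_nbr euq eq.
Qed.

Lemma nlS0 x : x \in S0 -> ~~ e l x.
Proof. by rewrite inS0 => /and3P[xu _ xS]; rewrite Hl // (negbTE xu). Qed.

Lemma HuS0 x : x \in S0 -> e u x = e u' x.
Proof. by rewrite inS0 => /and3P[_ xl xS]; apply: Hu; rewrite !inE xl xS. Qed.

Lemma u'S0 : u' \in S0.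
Proof. by rewrite inS0 u'u u'l u'S. Qed.

Lemma prime0 : 3 <= #|S0| -> prime_on e S0.
Proof.
move=> S03; split=> // M modM; case: (modM) => sM HM.
have sMS : M \subset S.
  by apply: (subset_trans sM); apply/subsetP => x; rewrite inS0 => /and3P[].
have [u'M|u'M] := boolP (u' \in M); last first.
  have mS : module_on e S M.
    split=> // w; rewrite inE => /andP[wM wS].
    have [->|wl] := eqVneq w l.
      by right => m /(subsetP sM) mS0; apply: nlS0.
    have [->|wu] := eqVneq w u.
      have : u' \in S0 :\: M by rewrite inE u'M u'S0.
      case/HM => H; [left|right] => m mM; rewrite HuS0 ?H //; exact: (subsetP sM).
    by apply: HM; rewrite inE wM inS0 wu wl wS.
  case: PS => _ /(_ _ mS) [E|[E|E]]; [by left| |by right; right].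
  by exfalso; move: lS; rewrite -E => /(subsetP sM); rewrite inS0 eqxx andbF.
case: (classic (exists2 c, c \in S0 :\: M & forall m, m \in M -> e c m)).
- case=> c cD call; right; right.
  have sm : forall m, m \in M -> (m \in X) = (u' \in X).
    by move=> m mM; apply: (common_nbr (w:=c)); rewrite esym; apply: call.
  have E : M = [set u'].
    apply/eqP; rewrite eqEsubset sub1set u'M andbT; apply/subsetP => m mM.
    rewrite inE; apply/negPn/negP => mu'.
    have mS0 := subsetP sM m mM.
    have mS := subsetP sMS m mM.
    apply: (prime_twins PS mS u'S mu') => d dS dm du'.
    have [->|dl] := eqVneq d l; first by rewrite esym (negbTE (nlS0 mS0)) (negbTE nu'l).
    have [->|du] := eqVneq d u.
      rewrite (negbTE nu'u); apply/negbTE; apply: same_noedge; by rewrite sm // su.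
    have [dM|dM] := boolP (d \in M).
      by rewrite (negbTE (same_noedge _)) ?(negbTE (same_noedge _)) // ?sm.
    have : d \in S0 :\: M by rewrite inE dM inS0 du dl dS.
    case/HM => H; rewrite esym (esym u').
    + by rewrite !H.
    + by rewrite (negbTE (H _ mM)) (negbTE (H _ u'M)).
  by rewrite E cards1.
- move=> NC; right; left.
  have cl : forall p q, p \in M -> q \in S0 -> q \notin M -> ~~ e p q.
    move=> p q pM qS qM.
    have : q \in S0 :\: M by rewrite inE qM qS.
    case/HM => H; last by rewrite esym; apply: H.
    by exfalso; apply: NC; exists q => //; rewrite inE qM qS.
  have cM' : closed_in S (u |: (l |: M)).
    split.
      apply/subsetP => x; rewrite !inE => /orP[/eqP->|/orP[/eqP->|/(subsetP sMS)]] //.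
    move=> p q; rewrite !inE negb_or negb_or => pM' qS /and3P[qu ql qM].
    have qS0 : q \in S0 by rewrite inS0 qu ql qS.
    case/orP: pM' => [/eqP->|/orP[/eqP->|pM]].
    + by rewrite HuS0 //; apply: cl.
    + exact: nlS0.
    + exact: cl.
  have E : u |: (l |: M) = S.
    by apply: (prime_closed PS cM'); apply/set0Pn; exists u; rewrite !inE eqxx.
  apply/eqP; rewrite eqEsubset sM /=; apply/subsetP => x; rewrite inS0 => /and3P[xu xl xS].
  by move: xS; rewrite -E !inE (negbTE xu) (negbTE xl).
Qed.

Lemma crit0 : (forall w, w \in S -> ~ prime_on e (S :\ w)) -> 4 <= #|S0| ->
  forall w, w \in S0 -> ~ prime_on e (S0 :\ w).
Proof.
move=> NP S04 w wS0.
have S0w x : (x \in S0 :\ w) = [&& x != w, x != u, x != l & x \in S].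
  by rewrite in_setD1 inS0.
have Sw x : (x \in S :\ w) = (x != w) && (x \in S) by rewrite !inE.
move: (wS0); rewrite inS0 => /and3P[wu wl wS].
have S4 : 4 <= #|S|.
  apply: leq_trans S04 (subset_leq_card _); apply/subsetP => x; rewrite inS0 => /and3P[] //.
have S3w : 3 <= #|S0 :\ w| by move: S04; rewrite (cardsD1 w S0) wS0 /= add1n ltnS.
have lSw : l \in S :\ w by rewrite Sw eq_sym wl lS.
have uSw : u \in S :\ w by rewrite Sw eq_sym wu uS.
case: (dec PS wS S4 (NP w wS)) => [[M [cM M0 MS]]|[a [b [aSw bSw eaw nebw Hab]]]].
- have key : forall Y, closed_in (S :\ w) Y -> Y != set0 -> Y :&: S0 = set0 ->
      ~ prime_on e (S0 :\ w).
    move=> Y [sY clY] Y0 YS0.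
    have notS0 : forall y, y \in Y -> y \notin S0.
      move=> y yY; apply/negP => yS0.
      have : y \in Y :&: S0 by rewrite inE yY yS0.
      by rewrite YS0 inE.
    have uY : u \in Y.
      case/set0Pn: Y0 => y yY.
      have := subsetP sY y yY; rewrite Sw => /andP[_ yS].
      move: (notS0 y yY); rewrite inS0 yS andbT negb_and !negbK => /orP[/eqP<-//|/eqP yl].
      apply: contraT => uY; have := clY y u yY uSw uY; by rewrite yl elu.
    have nb : forall q, q \in S -> e u' q -> q = w.
      move=> q qS eq; apply/eqP/negPn/negP => qw.
      have ql : q != l by apply: contraTneq eq => ->; rewrite (negbTE nu'l).
      have euq : e u q by rewrite Hu // !inE ql qS.
      have qY : q \in Y.
        apply: contraT => qY; have := clY u q uY _ qY; rewrite euq; apply.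
        by rewrite Sw qw qS.
      move: (notS0 q qY); rewrite inS0 ql qS !andbT negbK => /eqP qu.
      by move: eq; rewrite qu (negbTE nu'u).
    case: (prime_nbr PS u'S) => q qS eq.
    have qw := nb q qS eq.
    have u'w : u' != w by apply: contraTneq eq => ->; rewrite qw eirr.
    apply: (@not_prime_closed (S0 :\ w) [set u']).
    + split; first by rewrite sub1set S0w u'w u'u u'l u'S.
      move=> p r; rewrite inE => /eqP-> rS _; apply/negP => eu'r.
      move: rS; rewrite S0w => /and4P[rw' _ _ rS].
      by move: rw'; rewrite (nb r rS eu'r) eqxx.
    + by apply/set0Pn; exists u'; rewrite inE.
    + by apply/eqP => E; move: S3w; rewrite -E cards1.
  have [MS0|MS0] := eqVneq (M :&: S0) set0; first exact: (key M cM M0 MS0).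
  have cB := closed_compl cM.
  have B0 : (S :\ w) :\: M != set0.
    apply: contraNneq MS => /eqP; rewrite setD_eq0 => sub.
    by rewrite eqEsubset sub; case: cM => ->.
  have [BS0|BS0] := eqVneq (((S :\ w) :\: M) :&: S0) set0; first exact: (key _ cB B0 BS0).
  apply: (@not_prime_closed (S0 :\ w) (M :&: S0)) => //.
  + split.
      apply/subsetP => x /setIP[xM xS0]; rewrite in_setD1 xS0 andbT.
      by case: cM => /subsetP/(_ x xM); rewrite Sw => /andP[].
    move=> p q /setIP[pM pS0] qSw qMS0.
    have qS0 : q \in S0 by move: qSw; rewrite in_setD1 => /andP[].
    have qM : q \notin M by apply: contra qMS0 => qM; rewrite inE qM qS0.
    have qSw' : q \in S :\ w by move: qSw; rewrite S0w Sw => /and4P[-> _ _ ->].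
    by case: cM => _; apply.
  + apply/eqP => E; case/set0Pn: BS0 => x /setIP[].
    rewrite inE => /andP[xM xSw] xS0.
    have : x \in S0 :\ w by move: xSw; rewrite Sw in_setD1 xS0 => /andP[-> _].
    by rewrite -E inE (negbTE xM).
- move: (aSw) (bSw); rewrite !Sw => /andP[aw aS] /andP[bw bS].
  have [al|al] := eqVneq a l; first by rewrite al Hl // (negbTE wu) in eaw.
  have [au|au] := eqVneq a u.
    exfalso; have := Hab l lSw; rewrite au (esym u) elu => ebl.
    have : e l b by rewrite esym -ebl.
    rewrite Hl // => /eqP bu.
    by move: nebw; rewrite bu -au eaw.
  have [bu|bu] := eqVneq b u.
    exfalso; have := Hab l lSw; rewrite bu (esym u) elu => eal.
    by rewrite esym Hl // (negbTE au) in eal.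
  have aS0 : a \in S0 :\ w by rewrite S0w aw au al aS.
  have [bl|bl] := eqVneq b l.
    apply: (@not_prime_closed (S0 :\ w) [set a]).
    + split; first by rewrite sub1set.
      move=> p q; rewrite inE => /eqP-> qS _.
      move: (qS); rewrite S0w => /and4P[qw qu _ qS'].
      by rewrite Hab ?Sw ?qw // bl Hl // (negbTE qu).
    + by apply/set0Pn; exists a; rewrite inE.
    + by apply/eqP => E; move: S3w; rewrite -E cards1.
  have bS0 : b \in S0 :\ w by rewrite S0w bw bu bl bS.
  move=> P0; apply: (prime_twins P0 aS0 bS0).
    by apply: contraTneq eaw => ->; exact: nebw.
  move=> c cS _ _; apply: Hab.
  by move: cS; rewrite S0w Sw => /and4P[-> _ _ ->].
Qed.

Lemma lift z : chain_on S0 -> z \in S ->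
  (forall c, c \in S -> e z c = (c == u) || (c == u')) -> chain_on S.
Proof.
move=> ch0 zS Hz.
have ezu : e z u by rewrite Hz // eqxx.
have ezu' : e z u' by rewrite Hz // eqxx orbT.
have sz : (z \in X) = ~~ (u' \in X) by rewrite (side_opp ezu') negbK.
have sl : (l \in X) = (z \in X) by apply: (common_nbr elu ezu).
have su' := su.
have zS0 : z \in S0.
  rewrite inS0 zS andbT; apply/andP; split.
  - by apply: contraTneq ezu => ->; rewrite eirr.
  - by apply: contraTneq ezu' => ->; rewrite Hl // (negbTE u'u).
have K : forall x, x \in S0 -> (x \in X) = (z \in X) -> e x u.
  move=> x xS0 sx.
  suff : e x u' by rewrite esym -HuS0 // esym.
  have xS : x \in S by move: xS0; rewrite inS0 => /and3P[].
  case: (ch0 x z xS0 zS0 sx) => H; last by apply: H u'S0 ezu'.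
  case: (prime_nbr PS xS) => q qS exq.
  have [ql|ql] := eqVneq q l.
    by exfalso; move: exq; rewrite ql esym (negbTE (nlS0 xS0)).
  have [qu|qu] := eqVneq q u.
    by rewrite esym -HuS0 // esym -qu.
  have qS0 : q \in S0 by rewrite inS0 qu ql qS.
  by have := H q qS0 exq; rewrite Hz // (negbTE qu) /= => /eqP <-.
have main : forall a b, a \in S -> b \in S -> (a \in X) = (b \in X) ->
    (a == l) || (a == u) ->
    (forall c, c \in S -> e a c -> e b c) \/ (forall c, c \in S -> e b c -> e a c).
  move=> a b aS bS sab /orP[/eqP Ea|/eqP Ea]; subst a.
  - left => c cS; rewrite Hl // => /eqP->.
    have [->|bl] := eqVneq b l; first exact: elu.
    have [bu|bu] := eqVneq b u.
      by exfalso; move: sab sl su' sz; rewrite bu; case: (u \in X); case: (z \in X); case: (u' \in X); case: (l \in X).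
    apply: K; first by rewrite inS0 bu bl bS.
    by rewrite -sab.
  - right => c cS ebc.
    have [bu|bu] := eqVneq b u; first by rewrite -bu.
    have [bl|bl] := eqVneq b l.
      by exfalso; move: sab sl su' sz; rewrite bl; case: (u \in X); case: (z \in X); case: (u' \in X); case: (l \in X).
    have bS0 : b \in S0 by rewrite inS0 bu bl bS.
    have [cl|cl] := eqVneq c l.
      by exfalso; move: ebc; rewrite cl esym (negbTE (nlS0 bS0)).
    have [cu|cu] := eqVneq c u.
      by exfalso; move: ebc; rewrite cu esym (negbTE (same_noedge sab)).
    have cS0 : c \in S0 by rewrite inS0 cu cl cS.
    rewrite esym; apply: K => //.
    move: (side_opp ebc) sab su' sz; case: (c \in X); case: (b \in X); case: (u \in X);
      case: (u' \in X); case: (z \in X) => //.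
move=> a b aS bS sab.
case: (boolP ((a == l) || (a == u))) => ha; first exact: main.
case: (boolP ((b == l) || (b == u))) => hb.
  by case: (main b a bS aS (sym_eq sab) hb) => H; [right|left]; exact: H.
move: ha hb; rewrite !negb_or => /andP[al au] /andP[bl bu].
have aS0 : a \in S0 by rewrite inS0 al au aS.
have bS0 : b \in S0 by rewrite inS0 bl bu bS.
have gen : forall a' b', a' \in S0 -> b' \in S0 -> (a' \in X) = (b' \in X) ->
    (forall c, c \in S0 -> e a' c -> e b' c) -> forall c, c \in S -> e a' c -> e b' c.
  move=> a' b' aS0' bS0' s' H c cS eac.
  have [cl|cl] := eqVneq c l.
    by exfalso; move: eac; rewrite cl esym (negbTE (nlS0 aS0')).
  have [cu|cu] := eqVneq c u.
    rewrite cu in eac *; apply: K => //.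
    move: (side_opp eac) s' su' sz; case: (a' \in X); case: (b' \in X); case: (u \in X);
      case: (u' \in X); case: (z \in X) => //.
  by apply: H => //; rewrite inS0 cu cl cS.
case: (ch0 a b aS0 bS0 sab) => H; [left|right]; apply: gen => //.
Qed.

End Step.

Lemma crit_chain S : critical_on S -> chain_on S.
Proof.
have [n] := ubnP #|S|; elim: n S => // n IH S ltSn [PS NP].
case: (leqP #|S| 3) => [S3|S4]; first exact: chain_small.
case: (leaf (conj PS NP) S4) => l [u [lS uS Hl]].
have elu : e l u by rewrite Hl // eqxx.
have ul : u != l by apply: contraTneq elu => ->; rewrite eirr.
have uSl : u \in S :\ l by rewrite !inE ul uS.
case: (dec PS lS S4 (NP l lS)) => [[M [cM M0 MS]]|[a [u' [aS u'Sl eal nu'l Hau']]]].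
  exfalso; case: (split_closed cM M0 MS uSl) => A [[sA clA] A0 uA].
  have cAS : closed_in S A.
    split; first by apply: (subset_trans sA); apply: subsetDl.
    move=> p q pA qS qA; have [->|ql] := eqVneq q l.
      have pS : p \in S by have := subsetP sA p pA; rewrite !inE => /andP[].
      by rewrite esym Hl //; apply: contraNneq uA => <-.
    by apply: clA => //; rewrite !inE ql qS.
  have E := prime_closed PS cAS A0.
  by move: uA; rewrite E uS.
have aS' : a \in S by move: aS; rewrite !inE => /andP[].
have au : a = u by apply/eqP; rewrite -Hl // esym.
subst a.
move: (u'Sl); rewrite !inE => /andP[u'l u'S].
have u'u : u' != u by apply: contraNneq nu'l => ->; exact: eal.
have Hu : forall c, c \in S :\ l -> e u c = e u' c := Hau'.
have uSu' : u \in S :\ u' by rewrite !inE eq_sym u'u uS.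
case: (dec PS u'S S4 (NP u' u'S)) => [[M [cM M0 MS]]|[z [b [zS bS ezu' nbu' Hzb]]]].
  exfalso; case: (split_closed cM M0 MS uSu') => A [[sA clA] A0 uA].
  have cAS : closed_in S A.
    split; first by apply: (subset_trans sA); apply: subsetDl.
    move=> p q pA qS qA; have [->|qu'] := eqVneq q u'; last first.
      by apply: clA => //; rewrite !inE qu' qS.
    apply/negP => epu'.
    have pS : p \in S by have := subsetP sA p pA; rewrite !inE => /andP[].
    have pl : p != l by apply: contraTneq epu' => ->; rewrite Hl // (negbTE u'u).
    have epu : e p u by rewrite esym (Hu p); [rewrite esym | rewrite !inE pl pS].
    by have := clA p u pA uSu' uA; rewrite epu.
  have E := prime_closed PS cAS A0.
  by move: uA; rewrite E uS.
have zS' : z \in S by move: zS; rewrite !inE => /andP[].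
have bS' : b \in S by move: bS; rewrite !inE => /andP[].
have zl : z != l by apply: contraTneq ezu' => ->; rewrite Hl // (negbTE u'u).
have ezu : e z u by rewrite esym (Hu z); [rewrite esym | rewrite !inE zl zS'].
have bl : b = l.
  apply/eqP; apply: contraT => bl.
  have ebu : e b u by rewrite -Hzb.
  have : e u' b by rewrite -(Hu b); [rewrite esym | rewrite !inE bl bS'].
  by rewrite esym (negbTE nbu').
subst b.
have Hz : forall c, c \in S -> e z c = (c == u) || (c == u').
  move=> c cS; have [->|cu'] := eqVneq c u'; first by rewrite ezu' orbT.
  by rewrite orbF Hzb ?Hl // !inE cu' cS.
have CS1 := cardsD1 l S; rewrite lS in CS1.
have CS2 := cardsD1 u (S :\ l); rewrite uSl in CS2.
have ch0 : chain_on (S :\ l :\ u).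
  case: (leqP #|S :\ l :\ u| 3) => [S03|S04]; first exact: chain_small.
  apply: IH.
    rewrite ltnS in ltSn; apply: (leq_trans _ ltSn); apply: proper_card.
    apply: (sub_proper_trans (subD1set _ u)); exact: properD1.
  split.
    by apply: (prime0 PS lS uS u'S Hl Hu u'l u'u); apply: ltnW.
  exact: (crit0 PS lS uS u'S Hl Hu u'l u'u NP S04).
exact: (lift PS uS u'S Hl Hu u'l u'u ch0 zS' Hz).
Qed.

Lemma P5_of a b c d w : e a w -> e c w -> e a b -> ~~ e c b -> e c d -> ~~ e a d ->
  contains_P5 e.
Proof.
move=> eaw ecw eab ncb ecd nad.
have sac : (a \in X) = (c \in X) := common_nbr eaw ecw.
have sbw : (b \in X) = (w \in X) by apply: (common_nbr (w:=a)); rewrite esym.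
have swd : (w \in X) = (d \in X) by apply: (common_nbr (w:=c)); rewrite esym.
have nbw : e b w = false by apply/negbTE/same_noedge.
have nwd : e w d = false by apply/negbTE/same_noedge.
have nbd : e b d = false by apply/negbTE/same_noedge; rewrite sbw swd.
have nac : e a c = false by apply/negbTE/same_noedge.
have nbc : e b c = false by rewrite esym; apply/negbTE.
have nad' : e a d = false by apply/negbTE.
have Ne : forall x y, e x y = false -> x != y -> True by [].
have ba : b != a by apply: contraTneq eab => ->; rewrite eirr.
have bw : b != w by apply: contraNneq ncb => ->; rewrite ecw.
have bc : b != c by apply: contraTneq eab => ->; rewrite nac.
have bd : b != d by apply: contraNneq ncb => ->; rewrite ecd.
have aw : a != w by apply: contraTneq eaw => ->; rewrite eirr.
have ac : a != c by apply: contraTneq eab => ->; rewrite (negbTE ncb).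
have ad : a != d by apply: contraTneq ecd => <-; rewrite esym nac.
have wc : w != c by apply: contraTneq ecw => ->; rewrite eirr.
have wd : w != d by apply: contraTneq eaw => ->; rewrite nad'.
have cd : c != d by apply: contraTneq ecd => ->; rewrite eirr.
pose s := [:: b; a; w; c; d].
have U : uniq s.
  rewrite /s /= !inE !negb_or ba bw bc bd aw ac ad wc wd cd.
  done.
exists (fun i : 'I_5 => nth a s i); split.
  move=> i j /eqP; rewrite nth_uniq // => /eqP E; exact: val_inj.
have E1 := eab; have E2 := eaw; have E3 := ecw; have E4 := ecd.
move=> [[|[|[|[|[|i]]]]] Hi] [[|[|[|[|[|j]]]]] Hj] //=; rewrite /path_adj /=;
  rewrite ?eirr // ?(esym b a) ?E1 ?(esym w a) ?E2 ?(esym w c) ?E3 ?(esym d c) ?E4 //;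
  rewrite ?(esym w b) ?nbw ?(esym c b) ?nbc ?(esym d b) ?nbd ?(esym c a) ?nac ?(esym d a) ?nad'
    ?(esym d w) ?nwd //.
Qed.

Lemma P5free_common : ~ contains_P5 e -> forall a c w, e a w -> e c w ->
  (forall x, e a x -> e c x) \/ (forall x, e c x -> e a x).
Proof.
move=> NP a c w eaw ecw.
case: (classic (forall x, e a x -> e c x)) => H1; first by left.
case: (classic (forall x, e c x -> e a x)) => H2; first by right.
exfalso; apply: NP.
have [b eab ncb] : exists2 b, e a b & ~~ e c b.
  apply: NNPP => H; apply: H1 => x eax; apply/negPn/negP => ncx; apply: H; by exists x.
have [d ecd nad] : exists2 d, e c d & ~~ e a d.
  apply: NNPP => H; apply: H2 => x ecx; apply/negPn/negP => nax; apply: H; by exists x.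
exact: (P5_of eaw ecw eab ncb ecd nad).
Qed.

Lemma dom : prime_on e [set: T] -> ~ contains_P5 e -> forall x0, x0 \in X ->
  exists2 x, x \in X & forall y, y \notin X -> e x y.
Proof.
move=> PT NP x0 x0X.
pose N x := [set y | e x y].
case: (arg_maxnP (fun x => #|N x|) x0X) => xs xsX0 Hmax.
have xsX : xs \in X := xsX0.
pose U := [set x' in X | [exists y, e x' y && e xs y]].
pose M := U :|: N xs.
have cM : closed_in [set: T] M.
  split; first exact: subsetT.
  move=> p q; rewrite !inE => pM _ qM; apply/negP => epq.
  move: qM; rewrite negb_or => /andP[qU qN].
  case/orP: pM => [/andP[pX /existsP[y0 /andP[epy exy]]]|exp].
  - case: (P5free_common NP epy exy) => H.
    + by move: qN; rewrite (H _ epq).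
    + have E : N xs == N p.
        rewrite eqEcard; apply/andP; split; last exact: Hmax.
        by apply/subsetP => z; rewrite !inE => /H.
      have : q \in N p by rewrite inE.
      by rewrite -(eqP E) inE (negbTE qN).
  - have pX : p \notin X by rewrite (side_opp exp) negbK.
    have qX : q \in X by rewrite (side_opp epq) pX.
    move: qU; rewrite qX /=; apply/negP; rewrite negbK; apply/existsP; exists p.
    by rewrite esym epq exp.
have M0 : M != set0.
  apply/set0Pn; exists xs; rewrite !inE xsX /=; apply/orP; left.
  case: (prime_nbr PT (in_setT xs)) => q _ exq; apply/existsP; exists q; by rewrite exq.
have E := prime_closed PT cM M0.
exists xs => // y yX.
have : y \in M by rewrite E in_setT.
by rewrite !inE (negbTE yX) /=.
Qed.


Lemma half_of_chain : prime_on e [set: T] -> chain_on [set: T] -> half_graph e.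
Proof.
move=> PT ch.
have ch' : forall a b, (a \in X) = (b \in X) ->
    (forall c, e a c -> e b c) \/ (forall c, e b c -> e a c).
  move=> a b s; case: (ch a b (in_setT a) (in_setT b) s) => H; [left|right] => c;
  exact: H c (in_setT c).
have twin : forall a b, (forall c, e a c = e b c) -> a = b.
  move=> a b H; apply/eqP; apply: contraT => ab; exfalso.
  exact: (prime_twins PT (in_setT a) (in_setT b) ab (fun c _ _ _ => H c)).
pose N x := [set y | e x y].
have NP : forall x, exists y, e x y.
  by move=> x; case: (prime_nbr PT (in_setT x)) => y _ exy; exists y.
pose U x := [set x0 in X | N x \subset N x0].
pose phi x := if [pick y | (y \notin X) && (N y == U x)] is Some y then y else x.
have ex_phi : forall x, x \in X -> exists y, (y \notin X) && (N y == U x).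
  move=> x xX; case: (NP x) => y0 exy0.
  have y0N : y0 \in N x by rewrite inE.
  case: (arg_minnP (fun y => #|N y|) (P := fun y => y \in N x) y0N) => y yNx0 Hmin.
  have exy : e x y by move: yNx0; rewrite inE.
  have yX : y \notin X by rewrite (side_opp exy) xX.
  exists y; rewrite yX /=; apply/eqP/setP => x0; rewrite !inE.
  apply/idP/idP.
  - move=> eyx0.
    have x0X : x0 \in X by rewrite (side_opp eyx0).
    rewrite x0X /=; apply/subsetP => y'; rewrite !inE => exy'.
    apply/negPn/negP => nx0y'.
    have syy' : (y \in X) = (y' \in X) by apply: (common_nbr (w:=x)); rewrite esym.
    case: (ch' y y' syy') => H.
    + by move: nx0y'; rewrite esym (H _ eyx0).
    + have : #|N y| <= #|N y'| by apply: Hmin; rewrite inE.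
      have : N y' \proper N y.
        rewrite properE; apply/andP; split.
          by apply/subsetP => z; rewrite !inE => /H.
        apply/negP => /subsetP/(_ x0); rewrite !inE eyx0 esym => /(_ isT).
        by rewrite (negbTE nx0y').
      by move=> /proper_card; rewrite ltnNge => /negbTE ->.
  - case/andP => x0X sub.
    have : y \in N x0 by apply: (subsetP sub); rewrite inE.
    by rewrite inE esym.
have phiP : forall x, x \in X -> phi x \notin X /\ N (phi x) = U x.
  move=> x xX; rewrite /phi; case: pickP => [y /andP[yX /eqP E] | H]; first by [].
  by exfalso; case: (ex_phi x xX) => y Hy; move: (H y); rewrite Hy.
have ephi : forall x x', x \in X -> x' \in X -> e x (phi x') = (N x' \subset N x).
  move=> x x' xX x'X; have [_ E] := phiP x' x'X.
  have H : (x \in N (phi x')) = e (phi x') x by rewrite inE.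
  by rewrite esym -H E inE xX.
have surj : forall y, y \notin X -> exists2 x, x \in X & phi x = y.
  move=> y yX; case: (NP y) => x0 eyx0.
  case: (arg_minnP (fun x => #|N x|) (P := fun x => e y x) eyx0) => x eyx Hmin.
  have xX : x \in X by rewrite (side_opp eyx) yX.
  exists x => //; apply: twin => c.
  have [pX _] := phiP x xX.
  case: (boolP (c \in X)) => cX; last first.
    rewrite (negbTE (same_noedge _)); last by move: pX cX; case: (_ \in X); case: (_ \in X).
    rewrite (negbTE (same_noedge _)) //; by move: yX cX; case: (_ \in X); case: (_ \in X).
  rewrite esym ephi //; apply/idP/idP => [sub|eyc].
  - have : y \in N c by apply: (subsetP sub); rewrite inE esym.
    by rewrite inE esym.
  - have sxc : (x \in X) = (c \in X) by rewrite xX cX.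
    case: (ch' x c sxc) => H; first by apply/subsetP => z; rewrite !inE => /H.
    have le : #|N x| <= #|N c| by apply: Hmin.
    have E : N c == N x.
      by rewrite eqEcard le andbT; apply/subsetP => z; rewrite !inE => /H.
    by rewrite (eqP E).
exists X, (fun x x' => N x' \subset N x), phi.
split; [split; [|split; [|split]]|split; [|split; [|split]]].
- by move=> x _; exact: subxx.
- move=> x y _ _ /andP[h1 h2]; apply: twin => c.
  by apply/idP/idP => h; [move: (subsetP h2 c) | move: (subsetP h1 c)]; rewrite !inE => /(_ h).
- by move=> y x z _ _ _ h1 h2; exact: subset_trans h2 h1.
- move=> x y xX yX; have sxy : (x \in X) = (y \in X) by rewrite xX yX.
  case: (ch' x y sxy) => H; apply/orP; [right|left];
    by apply/subsetP => z; rewrite !inE => /H.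
- move=> x x' xX x'X E.
  have [_ E1] := phiP x xX; have [_ E2] := phiP x' x'X.
  have EU : U x = U x' by rewrite -E1 -E2 E.
  have h1 : x \in U x' by rewrite -EU inE xX subxx.
  have h2 : x' \in U x by rewrite EU inE x'X subxx.
  move: h1 h2; rewrite !inE => /andP[_ s1] /andP[_ s2].
  apply: twin => c; apply/idP/idP => h.
  + by move: (subsetP s2 c); rewrite !inE => /(_ h).
  + by move: (subsetP s1 c); rewrite !inE => /(_ h).
- by move=> x xX; rewrite inE; case: (phiP x xX).
- by move=> y; rewrite inE => /surj.
- move=> u v; split.
  + move=> euv; case: (boolP (u \in X)) => uX.
    * have vX : v \notin X by rewrite (side_opp euv) uX.
      case: (surj v vX) => x' x'X E; exists u, x'; split=> //.
      -- by rewrite -ephi // E.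
      -- by left.
    * have vX : v \in X by rewrite (side_opp euv).
      case: (surj u uX) => x' x'X E; exists v, x'; split=> //.
      -- by rewrite -ephi // E esym.
      -- by right.
  + case=> x [x' [xX x'X Lxx' [[-> ->]|[-> ->]]]].
    * by rewrite ephi.
    * by rewrite esym ephi.
Qed.

Lemma chain_noP5 : chain_on [set: T] -> ~ contains_P5 e.
Proof.
move=> ch [f [_ Hf]].
pose o0 := @Ordinal 5 0 isT. pose o1 := @Ordinal 5 1 isT. pose o2 := @Ordinal 5 2 isT.
pose o3 := @Ordinal 5 3 isT. pose o4 := @Ordinal 5 4 isT.
have e10 : e (f o1) (f o0) by rewrite Hf.
have e12 : e (f o1) (f o2) by rewrite Hf.
have e32 : e (f o3) (f o2) by rewrite Hf.
have e34 : e (f o3) (f o4) by rewrite Hf.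
have n30 : e (f o3) (f o0) = false by rewrite Hf.
have n14 : e (f o1) (f o4) = false by rewrite Hf.
case: (ch (f o1) (f o3) (in_setT _) (in_setT _) (common_nbr e12 e32)) => H.
- by move: (H _ (in_setT _) e10); rewrite n30.
- by move: (H _ (in_setT _) e34); rewrite n14.
Qed.
End G.

Lemma lin_max (T : finType) (D : {set T}) (R : rel T) : D != set0 ->
  {in D, reflexive R} -> {in D & D & D, forall x y z, R x y -> R y z -> R x z} ->
  {in D &, total R} -> exists2 m, m \in D & forall z, z \in D -> R z m.
Proof.
move=> /set0Pn[d dD] refl trans tot.
pose F m := #|[set z in D | R z m]|.
case: (arg_maxnP F dD) => m mD0 Hmax; have mD : m \in D := mD0.
exists m => // z zD; apply: contraT => nzm.
have Rmz : R m z by move: (tot m z mD zD); rewrite (negbTE nzm) orbF.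
have : [set y in D | R y m] \proper [set y in D | R y z].
  rewrite properE; apply/andP; split.
    apply/subsetP => y; rewrite !inE => /andP[yD Rym]; rewrite yD /=.
    exact: (trans y m z yD mD zD Rym Rmz).
  apply/negP => /subsetP/(_ z); rewrite !inE zD refl //= => /(_ isT).
  by rewrite (negbTE nzm).
move/proper_card; rewrite ltnNge.
by have -> : #|[set y in D | R y z]| <= #|[set y in D | R y m]| by exact: (Hmax z zD).
Qed.

Lemma lin_pred (T : finType) (H : {set T}) (R : rel T) :
  {in H, reflexive R} -> {in H & H & H, forall x y z, R x y -> R y z -> R x z} ->
  {in H &, total R} -> forall x, x \in H ->
  (forall z, z \in H -> R x z) \/
  exists p, [/\ p \in H, p != x, R p x & forall z, z \in H -> z != x -> R z x -> R z p].
Proof.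
move=> refl trans tot x xH.
pose D := [set z in H | (z != x) && R z x].
have [D0|D0] := eqVneq D set0.
  left => z zH; have [->|zx] := eqVneq z x; first exact: refl.
  have : z \notin D by rewrite D0 inE.
  rewrite !inE zH zx /= => nRzx.
  by move: (tot x z xH zH); rewrite (negbTE nRzx) orbF.
have sD : forall z, z \in D -> z \in H by move=> z; rewrite !inE => /andP[].
case: (@lin_max T D R D0).
- by move=> z /sD; apply: refl.
- by move=> a b c /sD aH /sD bH /sD cH; apply: trans.
- by move=> a b /sD aH /sD bH; apply: tot.
move=> p pD Hp; right; exists p.
move: (pD); rewrite !inE => /and3P[pH px Rpx]; split=> //.
by move=> z zH zx Rzx; apply: Hp; rewrite !inE zH zx.
Qed.

Section Half.
Variable T : finType.
Variable e : rel T.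
Hypothesis esym : symmetric e.
Hypothesis eirr : irreflexive e.
Variables (H : {set T}) (L : rel T) (phi : T -> T).
Hypothesis refl : {in H, reflexive L}.
Hypothesis anti : {in H &, antisymmetric L}.
Hypothesis trans : {in H & H & H, forall x y z, L x y -> L y z -> L x z}.
Hypothesis tot : {in H &, total L}.
Hypothesis inj : {in H &, injective phi}.
Hypothesis phiH : forall x, x \in H -> phi x \in ~: H.
Hypothesis surjH : forall y, y \in ~: H -> exists2 x, x \in H & phi x = y.
Hypothesis Hedge : forall u v, e u v <->
  exists x x', [/\ x \in H, x' \in H, L x x' &
    ((u = x /\ v = phi x') \/ (u = phi x' /\ v = x))].
Hypothesis T4 : 4 <= #|T|.

Lemma phiN x : x \in H -> phi x \notin H.
Proof. by move/phiH; rewrite inE. Qed.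

Lemma ephi x x' : x \in H -> x' \in H -> e x (phi x') = L x x'.
Proof.
move=> xH x'H; apply/idP/idP => [/Hedge [a [a' [aH a'H Laa' [[E1 E2]|[E1 E2]]]]]| Lxx'].
- by subst a; rewrite (inj x'H a'H E2).
- by move: xH; rewrite E1 (negbTE (phiN a'H)).
- by apply/Hedge; exists x, x'; split=> //; left.
Qed.

Lemma surj y : y \notin H -> exists2 x, x \in H & phi x = y.
Proof. by move=> yH; apply: surjH; rewrite inE. Qed.

Lemma hH u v : e u v -> (u \in H) != (v \in H).
Proof.
case/Hedge => a [a' [aH a'H _ [[-> ->]|[-> ->]]]].
- by rewrite aH (negbTE (phiN a'H)).
- by rewrite aH (negbTE (phiN a'H)).
Qed.

Lemma Hne : H != set0.
Proof.
have : 0 < #|T| by apply: leq_trans T4.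
case/card_gt0P => t _; apply/set0Pn.
case: (boolP (t \in H)) => tH; first by exists t.
by case: (surj tH) => x xH _; exists x.
Qed.

Lemma top : exists2 t, t \in H & forall z, z \in H -> L z t.
Proof. exact: (lin_max Hne refl trans tot). Qed.

Lemma bot : exists2 b, b \in H & forall z, z \in H -> L b z.
Proof.
apply: (@lin_max T H (fun a b => L b a) Hne) => //.
- by move=> x y z xH yH zH h1 h2; apply: (trans zH yH xH).
- by move=> x y xH yH; rewrite orbC; apply: tot.
Qed.

Lemma closed_all (M : {set T}) : (forall p q, p \in M -> e p q -> q \in M) -> M != set0 ->
  M = [set: T].
Proof.
move=> cl /set0Pn[m mM].
case: top => t tH Ht; case: bot => b bH Hb.
have claim : forall x, x \in H -> x \in M -> M = [set: T].
  move=> x xH xM.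
  have ptM : phi t \in M by apply: (cl x) => //; rewrite ephi // Ht.
  have HM : forall z, z \in H -> z \in M.
    by move=> z zH; apply: (cl (phi t)) => //; rewrite esym ephi // Ht.
  apply/setP => y; rewrite in_setT.
  case: (boolP (y \in H)) => yH; first exact: HM.
  case: (surj yH) => z zH <-.
  apply: (cl b); first exact: HM.
  by rewrite ephi // Hb.
case: (boolP (m \in H)) => mH; first exact: (claim m).
case: (surj mH) => z zH E.
apply: (claim b bH); apply: (cl m _ mM).
by rewrite -E esym ephi // Hb.
Qed.

Lemma chain_half : chain_on e H [set: T].
Proof.
move=> a b _ _ sab.
case: (boolP (a \in H)) => aH.
  have bH : b \in H by rewrite -sab.
  case/orP: (tot aH bH) => Lab; [right|left] => c _ ec.
  + have cH : c \notin H by move: (hH ec); rewrite bH; case: (c \in H).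
    case: (surj cH) => z zH Ez; move: ec; rewrite -Ez !ephi // => Lbz.
    exact: (trans aH bH zH Lab Lbz).
  + have cH : c \notin H by move: (hH ec); rewrite aH; case: (c \in H).
    case: (surj cH) => z zH Ez; move: ec; rewrite -Ez !ephi // => Laz.
    exact: (trans bH aH zH Lab Laz).
have bH : b \notin H by rewrite -sab.
case: (surj aH) => w wH Ea; case: (surj bH) => w' w'H Eb.
case/orP: (tot wH w'H) => Lww'; [left|right] => c _ ec.
+ have cH : c \in H by move: (hH ec); rewrite (negbTE aH); case: (c \in H).
  move: ec; rewrite -Ea -Eb esym ephi // esym ephi // => Lcw.
  exact: (trans cH wH w'H Lcw Lww').
+ have cH : c \in H by move: (hH ec); rewrite (negbTE bH); case: (c \in H).
  move: ec; rewrite -Ea -Eb esym ephi // esym ephi // => Lcw'.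
  exact: (trans cH w'H wH Lcw' Lww').
Qed.


Lemma prime_half : prime_on e [set: T].
Proof.
split; first by rewrite cardsT; apply: ltnW.
move=> M [_ HM].
apply: NNPP => nT.
have M0 : M != set0 by apply/eqP => E; apply: nT; left.
have MS : M != [set: T] by apply/eqP => E; apply: nT; right; left.
have M1 : #|M| != 1 by apply/eqP => E; apply: nT; right; right.
have [p [q [pM qM pq]]] : exists p q, [/\ p \in M, q \in M & p != q].
  apply: NNPP => Hn.
  have le1 : #|M| <= 1.
    apply/card_le1_eqP => x y xM yM; apply: NNPP => nE; apply: Hn; exists x, y.
    by split=> //; apply/eqP => E; apply: nE; rewrite E.
  have gt0 : 0 < #|M| by rewrite card_gt0.
  by rewrite eqn_leq le1 gt0 in M1.
have key : forall a b, a \in M -> b \in M -> a != b -> a \in H -> b \in H -> L a b ->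
    phi a \in M.
  move=> a b aM bM ab aH bH Lab; apply: contraT => paM.
  have : phi a \in [set: T] :\: M by rewrite !inE paM.
  case/HM => Hall.
  - have := Hall b bM; rewrite esym ephi // => Lba.
    by have := anti aH bH; rewrite Lab Lba => /(_ isT) E; rewrite E eqxx in ab.
  - by have := Hall a aM; rewrite esym ephi // refl.
have key2 : forall w w', w \in H -> w' \in H -> phi w \in M -> phi w' \in M -> w != w' ->
    L w w' -> w' \in M.
  move=> w w' wH w'H pwM pw'M ww' Lww'; apply: contraT => w'M.
  have : w' \in [set: T] :\: M by rewrite !inE w'M.
  case/HM => Hall.
  - have := Hall _ pwM; rewrite ephi // => Lw'w.
    by have := anti wH w'H; rewrite Lww' Lw'w => /(_ isT) E; rewrite E eqxx in ww'.
  - by have := Hall _ pw'M; rewrite ephi // refl.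
have two : exists a b, [/\ a \in M, b \in M, a \in H & b \notin H].
  case: (boolP (p \in H)) => pH; case: (boolP (q \in H)) => qH.
  - case/orP: (tot pH qH) => Lpq.
    + by exists p, (phi p); split=> //; [apply: (key p q) | apply: phiN].
    + exists q, (phi q); split=> //; [apply: (key q p) => // | apply: phiN] => //.
      by rewrite eq_sym.
  - by exists p, q.
  - by exists q, p.
  - case: (surj pH) => w wH Ew; case: (surj qH) => w' w'H Ew'.
    have ww' : w != w' by apply: contraNneq pq => E; rewrite -Ew -Ew' E.
    case/orP: (tot wH w'H) => L1.
    + exists w', q; split=> //; apply: (key2 w w') => //; by rewrite ?Ew ?Ew'.
    + exists w, p; split=> //; apply: (key2 w' w) => //; rewrite ?Ew ?Ew' //.
      by rewrite eq_sym.
case: two => a [b [aM bM aH bH]].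
have cl : forall r s, r \in M -> e r s -> s \in M.
  move=> r s rM ers; apply: contraT => sM.
  have : s \in [set: T] :\: M by rewrite !inE sM.
  case/HM => Hall.
  - have := hH (Hall a aM); have := hH (Hall b bM).
    by rewrite aH (negbTE bH); case: (s \in H).
  - by move: (Hall r rM); rewrite esym ers.
have := closed_all cl M0.
by move=> E; rewrite E eqxx in MS.
Qed.

Lemma critical_half : forall v, ~ prime_on e ([set: T] :\ v).
Proof.
move=> v.
have S3 : 3 <= #|[set: T] :\ v|.
  by have := cardsD1 v [set: T]; rewrite in_setT cardsT => E; move: T4; rewrite E /= add1n ltnS.
have inSv x : (x \in [set: T] :\ v) = (x != v) by rewrite !inE andbT.
case: (boolP (v \in H)) => vH.
- case: (lin_pred refl trans tot vH) => [Hmin|[p [pH pv Lpv Hp]]].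
  + have pvv : phi v != v by apply: contraNneq (phiN vH) => ->.
    apply: (@not_prime_closed _ _ esym _ [set phi v]).
    * split; first by rewrite sub1set inSv.
      move=> r s; rewrite inE => /eqP-> sS _; apply/negP => eps.
      have sH : s \in H by move: (hH eps); rewrite (negbTE (phiN vH)); case: (s \in H).
      move: eps; rewrite esym ephi // => Lsv.
      have := anti sH vH; rewrite Lsv Hmin // => /(_ isT) E.
      by move: sS; rewrite inSv E eqxx.
    * by apply/set0Pn; exists (phi v); rewrite inE.
    * by apply/eqP => E; move: S3; rewrite -E cards1.
  + move=> P; apply: (prime_twins esym P (a:=phi p) (b:=phi v)).
    * by rewrite inSv; apply: contraNneq (phiN pH) => ->.
    * by rewrite inSv; apply: contraNneq (phiN vH) => ->.
    * by apply/negP => /eqP E; move: pv; rewrite (inj pH vH E) eqxx.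
    * move=> c; rewrite inSv => cv _ _.
      case: (boolP (c \in H)) => cH.
      - rewrite esym ephi // esym ephi //; apply/idP/idP => h.
        + exact: (trans cH pH vH h Lpv).
        + exact: (Hp c cH cv h).
      - have nf : forall x, x \in H -> e (phi x) c = false.
          move=> x xH; apply/negP => ex; move: (hH ex).
          by rewrite (negbTE (phiN xH)) (negbTE cH).
        by rewrite !nf.
- case: (surj vH) => w wH Ew; subst v.
  have refl' : {in H, reflexive (fun a b => L b a)} by move=> x xH; exact: refl.
  have trans' : {in H & H & H, forall x y z, (fun a b => L b a) x y ->
      (fun a b => L b a) y z -> (fun a b => L b a) x z}.
    by move=> x y z xH yH zH /= h1 h2; exact: (trans zH yH xH h2 h1).
  have tot' : {in H &, total (fun a b => L b a)}.
    by move=> x y xH yH /=; rewrite orbC; exact: tot.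
  case: (lin_pred refl' trans' tot' wH) => [/= Hmax|[s [sH sw /= Lws Hs]]].
  + have wpw : w != phi w by apply: contraNneq (phiN wH) => <-.
    apply: (@not_prime_closed _ _ esym _ [set w]).
    * split; first by rewrite sub1set inSv.
      move=> r s; rewrite inE => /eqP-> sS _; apply/negP => ews.
      have sH : s \notin H by move: (hH ews); rewrite wH; case: (s \in H).
      case: (surj sH) => z zH Ez; move: ews; rewrite -Ez ephi // => Lwz.
      have := anti wH zH; rewrite Lwz Hmax // => /(_ isT) E.
      by move: sS; rewrite inSv -Ez -E eqxx.
    * by apply/set0Pn; exists w; rewrite inE.
    * by apply/eqP => E; move: S3; rewrite -E cards1.
  + move=> P; apply: (prime_twins esym P (a:=w) (b:=s)).
    * by rewrite inSv; apply: contraNneq (phiN wH) => <-.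
    * by rewrite inSv; apply: contraNneq (phiN wH) => <-.
    * by rewrite eq_sym.
    * move=> c; rewrite inSv => cv _ _.
      case: (boolP (c \in H)) => cH.
      - have nf : forall x, x \in H -> e x c = false.
          move=> x xH; apply/negP => ex; move: (hH ex).
          by rewrite xH cH.
        by rewrite !nf.
      - case: (surj cH) => z zH Ez; subst c.
        have zw : z != w by apply: contraNneq cv => ->.
        rewrite !ephi //; apply/idP/idP => h.
        + exact: (Hs z zH zw h).
        + exact: (trans wH sH zH Lws h).
Qed.

End Half.

Lemma pfree_chain (T : finType) (e : rel T) (X : {set T}) : symmetric e -> irreflexive e ->
  (forall u v, e u v -> (u \in X) != (v \in X)) -> prime_on e [set: T] ->
  ~ contains_P5 e -> chain_on e X [set: T].
Proof.
move=> esym eirr hX PT NP a b _ _ sab.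
have hX' : forall u v, e u v -> (u \in ~: X) != (v \in ~: X).
  by move=> u v /hX; rewrite !inE; case: (u \in X); case: (v \in X).
case: (prime_nbr esym PT (in_setT a)) => q _ eaq.
have conv : forall x, e a x -> e b x -> chain_on e X [set: T] -> True by [].
have fin : forall x, e a x -> e b x ->
    (forall c, c \in [set: T] -> e a c -> e b c) \/ (forall c, c \in [set: T] -> e b c -> e a c).
  move=> x eax ebx; case: (P5free_common esym eirr hX NP eax ebx) => H; [left|right] => c _;
  exact: H.
case: (boolP (a \in X)) => aX.
- have qX : q \in ~: X by rewrite inE; move: (hX a q eaq); rewrite aX; case: (q \in X).
  case: (dom esym eirr hX' PT NP qX) => x _ Hx.
  apply: (fin x); rewrite esym; apply: Hx; rewrite inE negbK //.
  by rewrite -sab.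
- have qX : q \in X by move: (hX a q eaq); rewrite (negbTE aX); case: (q \in X).
  case: (dom esym eirr hX PT NP qX) => x _ Hx.
  apply: (fin x); rewrite esym; apply: Hx => //.
  by rewrite -sab.
Qed.

Theorem proposition5p1 (T : finType) (e : rel T) :
  simple_graph e -> bipartite e -> 4 <= #|T| ->
  [/\ ((~ contains_P5 e /\ prime_graph e) <-> critical e),
      (critical e <-> half_graph e) &
      ((~ contains_P5 e /\ prime_graph e) <-> half_graph e)].
Proof.
move=> [esym eirr] [X hX] T4.
have HtoA : half_graph e -> [/\ ~ contains_P5 e, prime_graph e & critical e].
  case=> H [L [phi [[refl [anti [trans tot]]] [inj [phiH [surjH Hedge]]]]]].
  have hh : forall u v, e u v -> (u \in H) != (v \in H).
    by move=> u v; apply: (@hH T e H L phi phiH Hedge).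
  have PT := prime_half esym refl anti trans tot inj phiH surjH Hedge T4.
  split.
  - exact: (chain_noP5 hh (chain_half esym trans tot inj phiH surjH Hedge)).
  - exact: PT.
  - by split=> // v; exact: (critical_half esym refl anti trans tot inj phiH surjH Hedge T4).
have PtoH : ~ contains_P5 e /\ prime_graph e -> half_graph e.
  by case=> NP PT; exact: (half_of_chain esym hX PT (pfree_chain esym eirr hX PT NP)).
have CtoH : critical e -> half_graph e.
  case=> PT NPv.
  have co : critical_on e [set: T] by split=> // v _; exact: NPv.
  exact: (half_of_chain esym hX PT (crit_chain esym eirr hX co)).
split; split.
- by move=> A; have [_ _ C] := HtoA (PtoH A).
- by move=> C; have [A B _] := HtoA (CtoH C).
- exact: CtoH.
- by move=> Hg; have [_ _ C] := HtoA Hg.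
- exact: PtoH.
- by move=> Hg; have [A B _] := HtoA Hg.
Qed.
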